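(* Under the standing assumptions below, let $U\subset G$ be a finite subset contained in an elliptic subgroup of $G$. Then $E(U)\leqslant10\delta$. If, in addition, $|U|\geqslant11N_0$, then $\lambda_0(U)\leqslant2\kappa_0+12\delta$.
   Context: Standing assumptions: $X$ is a geodesic $\delta$--hyperbolic space (distance $|x-y|$, Gromov product $(p,q)_x=\frac12(|p-x|+|q-x|-|p-q|)$, $(p,r)_x\geqslant\min\{(p,q)_x,(q,r)_x\}-\delta$); $N_0\geqslant1$; either $\delta>0$ and $\kappa_0\geqslant\delta$, or $\delta=0$, $X$ a simplicial tree with edges of length $\rho_0$ and $\kappa_0\geqslant\rho_0$. $G$ acts by isometries, $(\kappa_0,N_0)$--acylindrically: for all $x,y$ with $|x-y|\geqslant\kappa_0$ at most $N_0$ elements $g$ satisfy $|gx-x|\leqslant100\delta$, $|gy-y|\leqslant100\delta$. An elliptic subgroup is a subgroup with bounded orbits in $X$. For finite $U\subset G$, $E(U):=\inf_{x\in X}\frac1{|U|}\sum_{u\in U}|ux-x|$; a point $x_0\in X$ is fixed with $\frac1{|U|}\sum_{u\in U}|ux_0-x_0|\leqslant E(U)+\delta$, and $\lambda_0(U):=\max_{u\in U}|ux_0-x_0|$. *)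

(* Defs.v *)
From Stdlib Require Import Reals List.
From Coquelicot Require Import Coquelicot.
Open Scope R_scope.

Definition is_metric {X : Type} (dist : X -> X -> R) : Prop :=
  (forall x y, dist x y = 0 <-> x = y) /\
  (forall x y, dist x y = dist y x) /\
  (forall x y z, dist x z <= dist x y + dist y z).

Definition is_geodesic {X : Type} (dist : X -> X -> R) : Prop :=
  forall x y : X, exists gam : R -> X,
    gam 0 = x /\ gam (dist x y) = y /\
    forall s t, 0 <= s <= dist x y -> 0 <= t <= dist x y ->
      dist (gam s) (gam t) = Rabs (s - t).

Definition gromov {X : Type} (dist : X -> X -> R) (p q x : X) : R :=
  (dist p x + dist q x - dist p q) / 2.

Definition is_hyperbolic {X : Type} (dist : X -> X -> R) (delta : R) : Prop :=
  0 <= delta /\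
  forall p q r x : X,
    gromov dist p r x >= Rmin (gromov dist p q x) (gromov dist q r x) - delta.

(** X is (the metric realization of) a simplicial tree with edges of length
    rho0: X is a geodesic 0-hyperbolic space (R-tree) with a vertex set V
    such that distances between vertices are multiples of rho0, and every
    point of X lies on an edge, i.e. a geodesic segment between two vertices
    at distance rho0. *)
Definition is_simplicial_tree {X : Type} (dist : X -> X -> R) (rho0 : R) : Prop :=
  0 < rho0 /\ is_geodesic dist /\ is_hyperbolic dist 0 /\
  exists V : X -> Prop,
    (forall v w, V v -> V w -> exists n : nat, dist v w = INR n * rho0) /\
    (forall x, exists v w, V v /\ V w /\ dist v w = rho0 /\
                dist v x + dist x w = dist v w).

Definition is_group {G : Type} (mul : G -> G -> G) (one : G) (inv : G -> G) : Prop :=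
  (forall a b c, mul a (mul b c) = mul (mul a b) c) /\
  (forall a, mul one a = a) /\ (forall a, mul a one = a) /\
  (forall a, mul (inv a) a = one) /\ (forall a, mul a (inv a) = one).

Definition is_isometric_action {G X : Type} (mul : G -> G -> G) (one : G)
    (act : G -> X -> X) (dist : X -> X -> R) : Prop :=
  (forall x, act one x = x) /\
  (forall g h x, act (mul g h) x = act g (act h x)) /\
  (forall g x y, dist (act g x) (act g y) = dist x y).

Definition is_acylindrical {G X : Type} (act : G -> X -> X) (dist : X -> X -> R)
    (delta kappa0 : R) (N0 : nat) : Prop :=
  forall x y : X, dist x y >= kappa0 ->
    forall l : list G, NoDup l ->
      (forall g, In g l -> dist (act g x) x <= 100 * delta /\
                           dist (act g y) y <= 100 * delta) ->
      (length l <= N0)%nat.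

Definition is_subgroup {G : Type} (mul : G -> G -> G) (one : G) (inv : G -> G)
    (H : G -> Prop) : Prop :=
  H one /\ (forall a b, H a -> H b -> H (mul a b)) /\ (forall a, H a -> H (inv a)).

Definition is_elliptic_subgroup {G X : Type} (mul : G -> G -> G) (one : G)
    (inv : G -> G) (act : G -> X -> X) (dist : X -> X -> R) (H : G -> Prop) : Prop :=
  is_subgroup mul one inv H /\
  forall x : X, exists C : R, forall g h, H g -> H h ->
    dist (act g x) (act h x) <= C.

(** Finite subsets of G are represented by duplicate-free lists; |U| = length U. *)
Definition disp_sum {G X : Type} (act : G -> X -> X) (dist : X -> X -> R)
    (U : list G) (x : X) : R :=
  fold_right (fun u acc => dist (act u x) x + acc) 0 U.

Definition avg_disp {G X : Type} (act : G -> X -> X) (dist : X -> X -> R)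
    (U : list G) (x : X) : R :=
  disp_sum act dist U x / INR (length U).

Definition energy {G X : Type} (act : G -> X -> X) (dist : X -> X -> R)
    (U : list G) : Rbar :=
  Glb_Rbar (fun r => exists x : X, r = avg_disp act dist U x).

Definition lambda0 {G X : Type} (act : G -> X -> X) (dist : X -> X -> R)
    (U : list G) (x0 : X) : R :=
  fold_right (fun u acc => Rmax (dist (act u x0) x0) acc) 0 U.

(* Main.v *)
Require Import Defs.
From Stdlib Require Import Reals List.
From Coquelicot Require Import Coquelicot.
Open Scope R_scope.
From Stdlib Require Import Lra Lia Classical.

Lemma dist_nonneg {X} (dist : X -> X -> R) : is_metric dist -> forall x y, 0 <= dist x y.
Proof.
  intros [H1 [H2 H3]] x y. pose proof (H3 x y x). pose proof (proj2 (H1 x x) eq_refl).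
  rewrite (H2 y x) in H. lra.
Qed.

Lemma sum_bound {G X} act (dist : X -> X -> R) (U : list G) x B :
  (forall u, In u U -> dist (act u x) x <= B) -> disp_sum act dist U x <= INR (length U) * B.
Proof.
  induction U as [|a U IH]; intros H; unfold disp_sum; cbn [fold_right length].
  - simpl; lra.
  - rewrite S_INR. assert (H1 := H a (or_introl eq_refl)).
    assert (H2 : disp_sum act dist U x <= INR (length U) * B) by (apply IH; intros; apply H; now right).
    unfold disp_sum in H2. lra.
Qed.

Lemma sum_nonneg {G X} act (dist : X -> X -> R) (U : list G) x :
  is_metric dist -> 0 <= disp_sum act dist U x.
Proof.
  intros Hm. unfold disp_sum. induction U; cbn [fold_right]. lra. pose proof (dist_nonneg dist Hm (act a x) x). unfold disp_sum in IHU. lra.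
Qed.

Lemma term_le_sum {G X} act (dist : X -> X -> R) (U : list G) x u :
  is_metric dist -> In u U -> dist (act u x) x <= disp_sum act dist U x.
Proof.
  intros Hm. unfold disp_sum. induction U; cbn [fold_right In]. tauto. intros [<-|H].
  - pose proof (sum_nonneg act dist U x Hm). unfold disp_sum in H. lra.
  - pose proof (dist_nonneg dist Hm (act a x) x). specialize (IHU H). unfold disp_sum in IHU. lra.
Qed.

Lemma avg_bound {G X} act (dist : X -> X -> R) (U : list G) x B :
  0 <= B -> (forall u, In u U -> dist (act u x) x <= B) -> avg_disp act dist U x <= B.
Proof.
  intros HB H. unfold avg_disp. pose proof (sum_bound act dist U x B H).
  destruct U as [|a U].
  - simpl. unfold Rdiv. rewrite Rmult_0_l. exact HB.
  - assert (0 < INR (length (a :: U))) by (apply lt_0_INR; simpl; lia).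
    apply Rmult_le_reg_r with (INR (length (a::U))); auto.
    unfold Rdiv. rewrite Rmult_assoc, Rinv_l by lra. lra.
Qed.

Lemma lambda0_bound {G X} act (dist : X -> X -> R) (U : list G) x B :
  0 <= B -> (forall u, In u U -> dist (act u x) x <= B) -> lambda0 act dist U x <= B.
Proof.
  intros HB. induction U; simpl; intros H. lra.
  apply Rmax_lub. apply H; auto. apply IHU; intros; apply H; auto.
Qed.

Lemma count_lemma {G X} act (dist : X -> X -> R) (U : list G) x d :
  is_metric dist -> 0 <= d ->
  d * (INR (length U) - INR (length (filter (fun u => if Rle_dec (dist (act u x) x) d then true else false) U)))
   <= disp_sum act dist U x.
Proof.
  intros Hm Hd. induction U as [|a U IH]. simpl. lra.
  pose proof (dist_nonneg dist Hm (act a x) x). unfold disp_sum in IH |- *.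
  cbn [fold_right length filter].
  destruct (Rle_dec (dist (act a x) x) d); cbn [length]; rewrite ?S_INR; nra.
Qed.

Lemma energy_le {G X} act (dist : X -> X -> R) (U : list G) c :
  Rbar_le (energy act dist U) (avg_disp act dist U c).
Proof.
  unfold energy. destruct (Glb_Rbar_correct (fun r => exists x : X, r = avg_disp act dist U x)) as [H _].
  apply H. eauto.
Qed.

Lemma inf_approx (S : R -> Prop) (s0 : R) :
  S s0 -> (forall s, S s -> 0 <= s) ->
  exists r, (forall s, S s -> r <= s) /\ (forall e, 0 < e -> exists s, S s /\ s < r + e).
Proof.
  intros H0 Hlb.
  destruct (completeness (fun t => S (- t))) as [m [Hub Hl]].
  - exists 0. intros t Ht. specialize (Hlb _ Ht). lra.
  - exists (- s0). rewrite Ropp_involutive. auto.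
  - exists (- m). split.
    + intros s Hs. assert (- s <= m) by (apply Hub; rewrite Ropp_involutive; auto). lra.
    + intros e He. apply NNPP. intros Hn.
      assert (m <= m - e); [|lra].
      apply Hl. intros t Ht.
      destruct (Rle_or_lt t (m - e)) as [|Hc]; auto.
      exfalso. apply Hn. exists (- t). split; auto. lra.
Qed.

Lemma quasi_center {G X} (dist : X -> X -> R) delta mul one inv (act : G -> X -> X) (H : G -> Prop) :
  is_metric dist -> is_geodesic dist -> is_hyperbolic dist delta ->
  is_group mul one inv -> is_isometric_action mul one act dist ->
  is_elliptic_subgroup mul one inv act dist H -> inhabited X ->
  forall e, 0 < e -> exists c, forall h, H h -> dist (act h c) c <= 4 * delta + 2 * e.
Proof.
  intros Hm Hg [Hd0 Hhyp] Hgrp [Ha1 [Ham Hai]] [[H1 [HM HI]] Hb] [x] e He.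
  destruct Hgrp as [Ga [G1l [G1r [Gvl Gvr]]]].
  pose proof (dist_nonneg dist Hm) as Dn.
  destruct Hm as [Dz [Ds Dt]].
  destruct (Hb x) as [C HC].
  set (P := fun c s => forall g, H g -> dist c (act g x) <= s).
  destruct (inf_approx (fun s => exists c, P c s) C) as [r [Hr1 Hr2]].
  - exists x. intros g Hg'. specialize (HC one g H1 Hg'). rewrite Ha1 in HC. auto.
  - intros s [c Hc]. specialize (Hc one H1). specialize (Dn c (act one x)). lra.
  -
    assert (Mid : forall c1 c2, P c1 (r + e) -> P c2 (r + e) -> dist c1 c2 <= 2 * e + 4 * delta).
    { intros c1 c2 P1 P2. set (d := dist c1 c2).
      destruct (Hg c1 c2) as [gam [g0 [gd gi]]].
      assert (Dd : 0 <= d) by apply Dn.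
      set (m := gam (d / 2)).
      assert (E1 : dist c1 m = d / 2).
      { unfold m. rewrite <- g0 at 1. rewrite gi by (fold d; split; lra). rewrite Rabs_left1 by lra. lra. }
      assert (E2 : dist c2 m = d / 2).
      { unfold m. rewrite <- gd at 1. rewrite gi by (fold d; split; lra). fold d. rewrite Rabs_right by lra. lra. }
      assert (Pm : P m (r + e + 2 * delta - d / 2)).
      { intros g Hgg. specialize (P1 g Hgg). specialize (P2 g Hgg).
        specialize (Hhyp c1 (act g x) c2 m). unfold gromov in Hhyp.
        rewrite E1, E2 in Hhyp. fold d in Hhyp.
        rewrite (Ds (act g x) m) in Hhyp. rewrite (Ds (act g x) c2) in Hhyp.
        unfold Rmin in Hhyp. destruct Rle_dec; lra. }
      assert (r <= r + e + 2 * delta - d / 2) by (apply Hr1; eauto). lra. }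
    destruct (Hr2 e He) as [s [[c Hc] Hs]].
    assert (Pc : P c (r + e)) by (intros g Hgg; specialize (Hc g Hgg); lra).
    exists c. intros h Hh.
    assert (Ph : P (act h c) (r + e)).
    { intros g Hgg.
      replace (act g x) with (act h (act (mul (inv h) g) x)).
      - rewrite Hai. apply Pc. apply HM; auto.
      - rewrite <- Ham, Ga, Gvr, G1l. reflexivity. }
    specialize (Mid _ _ Ph Pc). lra.
Qed.

Theorem proposition4p4
  (X : Type) (dist : X -> X -> R) (delta kappa0 : R) (N0 : nat)
  (G : Type) (mul : G -> G -> G) (one : G) (inv : G -> G) (act : G -> X -> X)
  (HXne : inhabited X)
  (Hmet : is_metric dist) (Hgeod : is_geodesic dist)
  (Hhyp : is_hyperbolic dist delta)
  (HN0 : (1 <= N0)%nat)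
  (Hcase : (0 < delta /\ kappa0 >= delta) \/
           (delta = 0 /\ exists rho0 : R,
              is_simplicial_tree dist rho0 /\ kappa0 >= rho0))
  (Hgrp : is_group mul one inv)
  (Hact : is_isometric_action mul one act dist)
  (Hacyl : is_acylindrical act dist delta kappa0 N0)
  (U : list G) (HU : NoDup U)
  (Hell : exists H : G -> Prop, is_elliptic_subgroup mul one inv act dist H /\
                                (forall u, In u U -> H u)) :
  Rbar_le (energy act dist U) (Finite (10 * delta)) /\
  ((11 * N0 <= length U)%nat ->
   forall x0 : X,
     Rbar_le (Finite (avg_disp act dist U x0))
             (Rbar_plus (energy act dist U) (Finite delta)) ->
     lambda0 act dist U x0 <= 2 * kappa0 + 12 * delta).
Proof.
  destruct Hell as [H [Hell HUH]].
  pose proof (quasi_center dist delta mul one inv act H Hmet Hgeod Hhyp Hgrp Hact Hell HXne) as QC.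
  pose proof (proj1 Hhyp) as Hd0.
  pose proof (dist_nonneg dist Hmet) as Dn.
  assert (Eb : forall e, 0 < e -> Rbar_le (energy act dist U) (Finite (4 * delta + 2 * e))).
  { intros e He. destruct (QC e He) as [c Hc].
    eapply Rbar_le_trans. apply (energy_le act dist U c).
    simpl. apply avg_bound. lra. intros u Hu. apply Hc. auto. }
  assert (E4 : Rbar_le (energy act dist U) (Finite (4 * delta))).
  { destruct (energy act dist U) as [en| |] eqn:Heq; simpl.
    - apply Rnot_lt_le. intros Hlt.
      specialize (Eb ((en - 4 * delta) / 4) ltac:(lra)). simpl in Eb. lra.
    - specialize (Eb 1 ltac:(lra)). simpl in Eb. exact Eb.
    - exact I. }
  split.
  { eapply Rbar_le_trans. exact E4. simpl. lra. }
  intros Hlen x0 Hx0.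
  assert (Havg : avg_disp act dist U x0 <= 5 * delta).
  { destruct (energy act dist U) as [en| |]; simpl in E4, Hx0 |- *; try contradiction; lra. }
  assert (Hn : 11 * INR N0 <= INR (length U)).
  { replace 11 with (INR 11) by (simpl; lra). rewrite <- mult_INR. apply le_INR. exact Hlen. }
  assert (HN : 1 <= INR N0) by (replace 1 with (INR 1) by reflexivity; apply le_INR; exact HN0).
  assert (Hsum : disp_sum act dist U x0 <= 5 * delta * INR (length U)).
  { unfold avg_disp in Havg. assert (0 < INR (length U)) by lra.
    apply Rmult_le_compat_r with (r := INR (length U)) in Havg; [|lra].
    unfold Rdiv in Havg. rewrite Rmult_assoc, Rinv_l in Havg by lra. lra. }
  destruct (Rle_lt_or_eq_dec 0 delta Hd0) as [Dpos|D0].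
  - destruct (QC delta Dpos) as [c Hc].
    assert (Hk : kappa0 >= delta) by (destruct Hcase as [[_ ?]|[? _]]; [auto|lra]).
    destruct (Rlt_or_le (dist x0 c) kappa0) as [Hlt|Hge].
    + apply lambda0_bound. lra. intros u Hu.
      destruct Hact as [_ [_ Hai]]. destruct Hmet as [_ [Ds Dt]].
      pose proof (Dt (act u x0) (act u c) x0). pose proof (Dt (act u c) c x0).
      rewrite Hai in *. rewrite (Ds c x0) in *. pose proof (Hc u (HUH u Hu)). lra.
    + exfalso.
      set (good := fun u => if Rle_dec (dist (act u x0) x0) (100 * delta) then true else false).
      assert (Hl : (length (filter good U) <= N0)%nat).
      { apply (Hacyl x0 c (Rle_ge _ _ Hge)). apply NoDup_filter; auto.
        intros g Hg. apply filter_In in Hg. destruct Hg as [HgU Hgg].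
        unfold good in Hgg. destruct Rle_dec; [|discriminate].
        split; auto. pose proof (Hc g (HUH g HgU)). lra. }
      apply le_INR in Hl.
      pose proof (count_lemma act dist U x0 (100 * delta) Hmet ltac:(lra)). fold good in H0.
      nra.
  - subst delta.
    assert (Hk : 0 <= kappa0).
    { destruct Hcase as [[? _]|[_ [rho [[Hr _] Hk]]]]. lra. lra. }
    apply lambda0_bound. lra. intros u Hu.
    pose proof (term_le_sum act dist U x0 u Hmet Hu). lra.
Qed.
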